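(* Let $n\ge 1$ and $1\le k\le d$ be integers, set $p=k/d$, and let $\mathbf{x}_1,\dots,\mathbf{x}_n\in\mathbb{R}^d$ with $\mathbf{x}_i=(x_{i1},\dots,x_{id})$. Each node $i$ independently chooses a uniformly random subset $S_i\subseteq\{1,\dots,d\}$ of size $k$, and sets $h_{ij}=x_{ij}$ if $j\in S_i$ and $h_{ij}=0$ otherwise. For each coordinate $j$ let $M_j=|\{i: j\in S_i\}|$. Let $T:\{1,\dots,n\}\to\mathbb{R}\setminus\{0\}$ be any function such that $$\bar\beta=\Big(\sum_{m=1}^{n}\frac{k}{d\,T(m)}\binom{n-1}{m-1}p^{m-1}(1-p)^{n-m}\Big)^{-1}$$ is well defined (i.e. the sum is nonzero). Define the Rand-$k$-Spatial estimate of coordinate $j$ by $\hat{x}_j=\frac{1}{n}\frac{\bar\beta}{T(M_j)}\sum_{i=1}^n h_{ij}$ if $M_j\ge 1$ and $\hat{x}_j=0$ if $M_j=0$. Then for every $j$, $\mathbb{E}[\hat{x}_j]=\frac{1}{n}\sum_{i=1}^n x_{ij}$, where the expectation is over the random subsets $S_1,\dots,S_n$.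
   Context: This is the Rand-$k$-Spatial family of estimators for distributed sparsified mean estimation: the server receives only the sparsified vectors $\mathbf{h}_i=(h_{i1},\dots,h_{id})$ (with positions) and estimates the mean $\bar{\mathbf{x}}=\frac1n\sum_i\mathbf{x}_i$. The weights $\binom{n-1}{m-1}p^{m-1}(1-p)^{n-m}$ are the probabilities that $M_j=m$ conditional on a fixed node having sent coordinate $j$. *)

(* Defs.v *)
From HB Require Import structures.
From mathcomp Require Import all_boot all_order all_algebra.
Set Implicit Arguments. Unset Strict Implicit. Unset Printing Implicit Defensive.
Import Order.TTheory GRing.Theory Num.Theory.
Local Open Scope ring_scope.

Definition selection (n d : nat) := {ffun 'I_n -> {set 'I_d}}.

Definition valid_sel (n d k : nat) (S : selection n d) : bool :=
  [forall i, #|S i| == k]%N.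

(* expectation under the uniform distribution on valid selections
   (= product of independent uniform k-subsets) *)
Definition expect_sel {R : realFieldType} (n d k : nat) (f : selection n d -> R) : R :=
  (\sum_(S : selection n d | valid_sel k S) f S) /
  (#|[pred S : selection n d | valid_sel k S]|)%:R.

Definition hcoord {R : realFieldType} (n d : nat) (x : 'M[R]_(n, d))
  (S : selection n d) (i : 'I_n) (j : 'I_d) : R :=
  if j \in S i then x i j else 0.

Definition Mcount (n d : nat) (S : selection n d) (j : 'I_d) : nat :=
  #|[set i | j \in S i]|.

Definition pk {R : realFieldType} (d k : nat) : R := k%:R / d%:R.

Definition beta_sum {R : realFieldType} (n d k : nat) (T : nat -> R) : R :=
  \sum_(1 <= m < n.+1)
     (k%:R / (d%:R * T m)) * ('C(n.-1, m.-1))%:R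
       * (pk d k) ^+ (m.-1) * (1 - pk d k) ^+ (n - m).

Definition betabar {R : realFieldType} (n d k : nat) (T : nat -> R) : R :=
  (beta_sum n d k T)^-1.

Definition xhat {R : realFieldType} (n d k : nat) (T : nat -> R)
  (x : 'M[R]_(n, d)) (S : selection n d) (j : 'I_d) : R :=
  if (0 < Mcount S j)%N then
    (n%:R)^-1 * (betabar n d k T / T (Mcount S j)) * \sum_(i < n) hcoord x S i j
  else 0.

(* Main.v *)
Require Import Defs.
From HB Require Import structures.
From mathcomp Require Import all_boot all_order all_algebra.
From mathcomp Require Import ring.
Import Order.TTheory GRing.Theory Num.Theory.

Lemma cnt_out (T : finType) (t : T) k :
  #|[pred X : {set T} | (#|X| == k) && (t \notin X)]| = 'C(#|T|.-1, k).
Proof.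
rewrite -(cardsC1 t) -cards_draws; apply: eq_card => X; rewrite !inE andbC.
congr (_ && _); apply/idP/subsetP => [tX y yX|H]; last first.
  by apply/negP => /H; rewrite !inE eqxx.
by rewrite !inE; apply: contraNneq tX => <-.
Qed.

Lemma cnt_in (T : finType) (t : T) k :
  #|[pred X : {set T} | (#|X| == k.+1) && (t \in X)]| = 'C(#|T|.-1, k).
Proof.
have hT : (0 < #|T|)%N by apply/card_gt0P; exists t.
have := cardID [pred X : {set T} | t \in X] [pred X : {set T} | #|X| == k.+1].
have C : #|[pred X : {set T} | #|X| == k.+1]| = 'C(#|T|, k.+1).
  by rewrite -card_draws; apply: eq_card => X; rewrite !inE.
rewrite C -(prednK hT) binS => H.
have E : #|[predD [pred X : {set T} | #|X| == k.+1] & [pred X : {set T} | t \in X]]| = 'C(#|T|.-1, k.+1).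
  by rewrite -(@cnt_out _ t); apply: eq_card => X; rewrite !inE andbC.
rewrite E in H.
have E2 : #|[predI [pred X : {set T} | #|X| == k.+1] & [pred X : {set T} | t \in X]]| = 'C(#|T|.-1, k).
  by apply/eqP; rewrite -(eqn_add2r 'C(#|T|.-1, k.+1)) H addnC.
by rewrite -E2; apply: eq_card => X; rewrite !inE.
Qed.

Local Open Scope ring_scope.
Definition setof (n d : nat) (S : {ffun 'I_n -> {set 'I_d}}) (j : 'I_d) : {set 'I_n} :=
  [set i | j \in S i].
Arguments setof {n d}.

Lemma prod_family (n : nat) (T : finType) (F : 'I_n -> pred T) :
  #|family F| = (\prod_(i < n) #|F i|)%N.
Proof. by rewrite card_family foldrE big_map big_enum. Qed.

Lemma prod_if (I : finType) (A : {set I}) (a b : nat) :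
  (\prod_(i : I) (if i \in A then a else b) = a ^ #|A| * b ^ #|[predC A]|)%N.
Proof.
rewrite (bigID (fun i => i \in A)) /=; congr (_ * _)%N.
  by rewrite -prod_nat_const; apply: eq_bigr => i ->.
by rewrite -prod_nat_const; apply: eq_bigr => i /negbTE ->.
Qed.

Lemma sum_sel (R : realFieldType) n d k (j : 'I_d) (G : {set 'I_n} -> R) :
  \sum_(S : {ffun 'I_n -> {set 'I_d}} | [forall i, #|S i| == k]%N) G (setof S j) =
  \sum_(A : {set 'I_n}) G A *+ (#|[pred X : {set 'I_d} | (#|X| == k) && (j \in X)]| ^ #|A|
      * #|[pred X : {set 'I_d} | (#|X| == k) && (j \notin X)]| ^ #|~:A|)%N.
Proof.
rewrite (partition_big (fun S => setof S j) predT) //=.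
apply: eq_bigr => A _.
rewrite (eq_bigr (fun _ => G A)); last by move=> S /andP[_ /eqP ->].
rewrite sumr_const; congr (_ *+ _).
pose F := fun i : 'I_n => [pred X : {set 'I_d} | (#|X| == k) && ((j \in X) == (i \in A))].
transitivity #|family F|.
  apply: eq_card => S; rewrite !inE.
  apply/andP/familyP => [[/forallP V /eqP E] i | H].
    by rewrite inE V /= -E inE eqxx.
  split; first by apply/forallP => i; have := H i; rewrite inE => /andP[].
  by apply/eqP/setP => i; rewrite inE; have := H i; rewrite inE => /andP[_ /eqP].
rewrite prod_family.
rewrite (eq_bigr (fun i => if i \in A then #|[pred X : {set 'I_d} | (#|X| == k) && (j \in X)]|
   else #|[pred X : {set 'I_d} | (#|X| == k) && (j \notin X)]|)); last first.
  move=> i _; case: (boolP (i \in A)) => iA; apply: eq_card => X.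
    by rewrite !inE iA unfold_in /= eqb_id.
  by rewrite !inE (negbTE iA) unfold_in /= eqbF_neg.
rewrite prod_if; congr (_ ^ _ * _ ^ _)%N.
by apply: eq_card => i; rewrite !inE.
Qed.

Lemma card_le (n : nat) (A : {set 'I_n.+1}) : (#|A| < n.+2)%N.
Proof. by have := max_card A; rewrite card_ord ltnS. Qed.

Lemma group_card (R : realFieldType) n (i : 'I_n.+1) (K : nat -> R) :
  \sum_(A : {set 'I_n.+1}) (if i \in A then K #|A| else 0) =
  \sum_(m < n.+1) K m.+1 *+ 'C(n, m).
Proof.
rewrite -big_mkcond /=.
rewrite (partition_big (fun A : {set 'I_n.+1} => (inord #|A| : 'I_n.+2)) predT) //=.
rewrite big_ord_recl /= big1 ?add0r; last first.
  move=> A /andP[iA /eqP E]; have := congr1 val E; rewrite /= inordK ?card_le //.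
  by move/eqP; rewrite cards_eq0 => /eqP A0; rewrite A0 inE in iA.
apply: eq_bigr => m _.
rewrite (eq_bigr (fun _ => K m.+1)); last first.
  by move=> A /andP[_ /eqP E]; have := congr1 val E; rewrite /= inordK ?card_le // ?lift0 => ->.
rewrite sumr_const; congr (_ *+ _).
have := @cnt_in _ i m; rewrite card_ord /= => <-; apply: eq_card => A; rewrite !inE andbC; congr (_ && _).
apply/eqP/eqP => [E | E]; first by have := congr1 val E; rewrite /= inordK ?card_le // ?lift0.
by apply: val_inj; rewrite /= inordK ?card_le // ?lift0.
Qed.

Local Open Scope ring_scope.

Theorem lemma2 (R : realFieldType) (n d k : nat)
  (hn : (1 <= n)%N) (hk : (1 <= k)%N) (hkd : (k <= d)%N)
  (x : 'M[R]_(n, d)) (T : nat -> R)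
  (hT : forall m : nat, (1 <= m <= n)%N -> T m != 0)
  (hbeta : beta_sum n d k T != 0) (j : 'I_d) :
  expect_sel k (fun S => xhat k T x S j) = (n%:R)^-1 * \sum_(i < n) x i j.
Proof.
case: n hn x hT hbeta => // n _ x hT hbeta.
case: k hk hkd hbeta => // k _ hkd hbeta.
case: d hkd x j hbeta => // d hkd x j hbeta.
rewrite /expect_sel.
have cardV : #|[pred S : selection n.+1 d.+1 | valid_sel k.+1 S]| = ('C(d.+1,k.+1) ^ n.+1)%N.
  transitivity #|family (fun _ : 'I_n.+1 => [pred X : {set 'I_d.+1} | #|X| == k.+1])|.
    apply: eq_card => S; rewrite /valid_sel [in LHS]inE.
    by apply/forallP/familyP => H i; have := H i; rewrite inE.
  rewrite prod_family (eq_bigr (fun _ => 'C(d.+1,k.+1))) ?prod_nat_const ?card_ord //.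
  move=> i _; have := card_draws 'I_d.+1 k.+1; rewrite card_ord => <-.
  by apply: eq_card => X; rewrite !inE.
rewrite cardV.
set c := (n.+1%:R)^-1 * betabar n.+1 d.+1 k.+1 T.
pose H (A : {set 'I_n.+1}) := \sum_(i < n.+1) x i j * (if i \in A then c / T #|A| else 0).
rewrite (eq_bigr (fun S => H (setof S j))); last first.
  move=> S _; rewrite /xhat /Mcount /H /setof; case: ifP => M0.
    rewrite mulr_sumr; apply: eq_bigr => i _; rewrite /hcoord inE.
    case: ifP => _; last by rewrite !mulr0.
    by rewrite /c mulrC !mulrA.
  symmetry; apply: big1 => i _; rewrite inE; case: ifP => ji; last by rewrite mulr0.
  by move: M0; rewrite card_gt0; case/set0Pn; exists i; rewrite inE.
rewrite /valid_sel /selection sum_sel.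
rewrite cnt_in cnt_out card_ord /=.
have cC : forall A : {set 'I_n.+1}, #|~: A| = (n.+1 - #|A|)%N.
  move=> A; apply/eqP; rewrite -(eqn_add2l #|A|) cardsC card_ord subnKC //.
  by have := card_le _ A; rewrite ltnS.
rewrite (eq_bigr (fun A : {set 'I_n.+1} => \sum_(i < n.+1) x i j * ((if i \in A then c / T #|A| else 0)
   *+ ('C(d, k) ^ #|A| * 'C(d, k.+1) ^ (n.+1 - #|A|))))); last first.
  by move=> A _; rewrite /H -sumrMnl cC; apply: eq_bigr => i _; rewrite mulrnAr.
rewrite exchange_big /= mulr_suml mulr_sumr; apply: eq_bigr => i _.
rewrite -mulr_sumr.
rewrite (eq_bigr (fun A : {set 'I_n.+1} => if i \in A then (c / T #|A|) *+ ('C(d, k) ^ #|A| * 'C(d, k.+1) ^ (n.+1 - #|A|)) else 0)); last first.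
  by move=> A _; case: (i \in A); rewrite ?mul0rn.
rewrite (group_card _ _ i (fun m => (c / T m) *+ ('C(d,k)^m * 'C(d,k.+1)^(n.+1 - m)))) -mulrA mulrC; congr (_ * _).
transitivity (c * beta_sum n.+1 d.+1 k.+1 T); last first.
  by rewrite /c /betabar -mulrA mulVf // mulr1.
rewrite /beta_sum (@big_addn R 0 +%R 0 n.+2 1) subn1 /= big_mkord mulr_sumr mulr_suml.
apply: eq_bigr => m _.
rewrite addn1 /= subSS.
have mn : (m <= n)%N by rewrite -ltnS.
have TD : T m.+1 != 0 by apply: hT; apply/andP; split; last rewrite ltnS.
have dD : (d.+1%:R : R) != 0 by rewrite pnatr_eq0.
have DD : ('C(d.+1, k.+1)%:R : R) != 0 by rewrite pnatr_eq0 -lt0n bin_gt0.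
have hA : ('C(d, k)%:R : R) = pk d.+1 k.+1 * 'C(d.+1, k.+1)%:R.
  apply: (mulfI dD); rewrite -natrM (mul_bin_diag d.+1 k) natrM /pk /=.
  by rewrite mulrA [d.+1%:R * _]mulrC divfK.
have hB : ('C(d, k.+1)%:R : R) = (1 - pk d.+1 k.+1) * 'C(d.+1, k.+1)%:R.
  apply: (mulfI dD); rewrite -natrM (mul_bin_down d.+1 k.+1) natrM natrB // /pk /=.
  by rewrite mulrA mulrBr mulr1 [d.+1%:R * (_ / _)]mulrC divfK.
rewrite -mulrnA -[c / T m.+1 *+ _]mulr_natr !natrM !natrX hA hB !exprMn.
have ED : ('C(d.+1, k.+1)%:R : R) ^+ n.+1 = 'C(d.+1, k.+1)%:R ^+ m.+1 * 'C(d.+1, k.+1)%:R ^+ (n - m).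
  by rewrite -exprD addSn subnKC.
rewrite ED /c [d.+1%:R^-1 ^+ m.+1]exprS [k.+1%:R ^+ m.+1]exprS.
have h1 : ('C(d.+1, k.+1)%:R : R) ^+ m.+1 != 0 by rewrite expf_neq0.
have h2 : ('C(d.+1, k.+1)%:R : R) ^+ (n - m) != 0 by rewrite expf_neq0.
move: ('C(d.+1, k.+1)%:R ^+ m.+1) h1 => D1 h1.
move: ('C(d.+1, k.+1)%:R ^+ (n - m)) h2 => D2 h2.
move: (betabar _ _ _ _) (n.+1%:R^-1) ((1 - pk d.+1 k.+1) ^+ (n - m)) ('C(n, m)%:R) => bb ni P1 cn.
move: (k.+1%:R ^+ m) (d.+1%:R^-1 ^+ m) => km dm.
move: (T m.+1) TD => t TD.
move: (k.+1%:R) (d.+1%:R) dD => kk dd dD.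
by field; rewrite TD dD h1 h2.
Qed.
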